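(* Let $(Y_n)$ satisfy Condition 1 and let $X_n$ be the number of rounds of the associated leader election process. Then $\mathbb E X_n<\infty$ for every $n$, $\mathbb E X_{n+1}-\mathbb E X_n=O(1/n)$, and $d_W(X_n,X_m)=O\bigl(|n-m|/(n\wedge m)\bigr)$ uniformly in $n,m\ge1$.
   Context: Condition 1: $(Y_n)_{n\ge1}$ is a sequence of random variables with $1\le Y_n\le n$ for all $n$ and $\Pr(Y_n=n)<1$ for $n\ge2$ (so $Y_1=1$), such that: (i) $\Pr(Y_n\le k)\ge\Pr(Y_{n+1}\le k)$ for all $n,k\ge1$; (ii) there are constants $\alpha\in(0,1)$, $\varepsilon>0$ and a sequence $\delta_n=O((\log n)^{-1-\varepsilon})$ with $\mathbb E Y_{n+1}-\mathbb E Y_n=\alpha+O(\delta_n)$; (iii) for such $\varepsilon,\delta_n$, $\Pr(|Y_n-\alpha n|>\delta_n n)=O(n^{-2-\varepsilon})$. (Here $\log 1$ is interpreted as a fixed positive number.) Leader election process: $X_1=0$ and $X_n\overset{d}{=}X_{Y_n}+1$ for $n\ge2$, with $Y_n$ independent of $(X_i)_{i\le n}$; i.e. $X_n$ is the number of steps to absorption at $1$ of the Markov chain started at $n$ with transition probabilities $P(i,j)=\Pr(Y_i=j)$. $d_W$ denotes the Wasserstein distance $d_W(X,Y)=\inf\mathbb E|X'-Y'|$ over couplings of the laws of $X$ and $Y$. *)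

(* Defs.v *)
From Stdlib Require Export Reals.
Open Scope R_scope.

(* The law of Y_n is encoded by p n k = Pr(Y_n = k).
   reach p t i = Pr(chain started at i is at state 1 at time t),
   for the Markov chain with transition P(i,j) = p i j. *)
Fixpoint reach (p : nat -> nat -> R) (t i : nat) : R :=
  match t with
  | O => if Nat.eqb i 1 then 1 else 0
  | S t' => sum_f_R0 (fun k => p i k * reach p t' k) i
  end.

(* pmf of X_n = absorption time at 1 of the chain started at n:
   Pr(X_n = t) = Pr(X_n <= t) - Pr(X_n <= t-1), since 1 is absorbing. *)
Definition pmfX (p : nat -> nat -> R) (n t : nat) : R :=
  match t with
  | O => reach p 0 n
  | S t' => reach p (S t') n - reach p t' n
  end.

Definition cdfY (p : nat -> nat -> R) (n k : nat) : R := sum_f_R0 (p n) k.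

Definition EY (p : nat -> nat -> R) (n : nat) : R :=
  sum_f_R0 (fun k => INR k * p n k) n.

Definition devY (p : nat -> nat -> R) (alpha dn : R) (n : nat) : R :=
  sum_f_R0 (fun k => if Rlt_dec (dn * INR n) (Rabs (INR k - alpha * INR n))
                     then p n k else 0) n.

Definition coupling (mu nu : nat -> R) (pi : nat -> nat -> R) : Prop :=
  (forall i j, 0 <= pi i j) /\
  (forall i, infinite_sum (fun j => pi i j) (mu i)) /\
  (forall j, infinite_sum (fun i => pi i j) (nu j)).

(* d_W(mu,nu) <= B, where d_W = inf over couplings of E|X'-Y'|;
   the (nonnegative) double series is bounded via its finite square partial sums. *)
Definition wass_le (mu nu : nat -> R) (B : R) : Prop :=
  forall eta, 0 < eta ->
    exists pi, coupling mu nu pi /\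
      forall N, sum_f_R0 (fun i => sum_f_R0 (fun j => pi i j * Rabs (INR i - INR j)) N) N
                <= B + eta.

(* Main.v *)
Require Import Defs.
From Stdlib Require Import Reals Lra Lia Psatz Arith ClassicalEpsilon.
Open Scope R_scope.

Fixpoint sm (f : nat -> R) (n : nat) : R :=
  match n with O => 0 | S n' => sm f n' + f n' end.

Lemma sm_S f n : sm f (S n) = sm f n + f n.
Proof. reflexivity. Qed.

Lemma sum_sm f n : sum_f_R0 f n = sm f (S n).
Proof. induction n; simpl in *; [ring| rewrite IHn; ring]. Qed.

Lemma sm_ext f g n : (forall k, (k < n)%nat -> f k = g k) -> sm f n = sm g n.
Proof. induction n; intros H; simpl; auto. rewrite IHn, H; auto. Qed.

Lemma sm_le f g n : (forall k, (k < n)%nat -> f k <= g k) -> sm f n <= sm g n.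
Proof. induction n; intros H; simpl; [lra|]. apply Rplus_le_compat; auto. Qed.

Lemma sm_plus f g n : sm (fun k => f k + g k) n = sm f n + sm g n.
Proof. induction n; simpl; [ring| rewrite IHn; ring]. Qed.

Lemma sm_minus f g n : sm (fun k => f k - g k) n = sm f n - sm g n.
Proof. induction n; simpl; [ring| rewrite IHn; ring]. Qed.

Lemma sm_scal c f n : sm (fun k => c * f k) n = c * sm f n.
Proof. induction n; simpl; [ring| rewrite IHn; ring]. Qed.

Lemma sm_const c n : sm (fun _ => c) n = INR n * c.
Proof. induction n; simpl sm; [simpl; ring| rewrite IHn, S_INR; ring]. Qed.

Lemma sm_nonneg f n : (forall k, (k < n)%nat -> 0 <= f k) -> 0 <= sm f n.
Proof. intros H. replace 0 with (sm (fun _ => 0) n). apply sm_le; auto.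
 rewrite sm_const; ring. Qed.

Lemma sm_mono_n f m n : (forall k, 0 <= f k) -> (m <= n)%nat -> sm f m <= sm f n.
Proof. intros H Hmn. induction Hmn; [lra|]. simpl. specialize (H m0). lra. Qed.

Lemma sm_exch f n m : sm (fun i => sm (fun j => f i j) m) n = sm (fun j => sm (fun i => f i j) n) m.
Proof. induction n; simpl.
 - rewrite sm_const; simpl; ring.
 - rewrite IHn, <- sm_plus. reflexivity. Qed.

Lemma sm_tail_le f g k N : (k <= N)%nat -> (forall j, 0 <= g j) ->
  (forall j, (k <= j < N)%nat -> f j <= g j) -> sm f N - sm f k <= sm g N.
Proof. intros HkN Hg H. replace N with (k + (N - k))%nat in * by lia.
 generalize (N - k)%nat H; clear H HkN N. intros d H. induction d.
 - rewrite Nat.add_0_r. assert (0 <= sm g k) by (apply sm_nonneg; auto). lra.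
 - rewrite Nat.add_succ_r. simpl. assert (f (k+d)%nat <= g (k+d)%nat) by (apply H; lia).
   assert (sm f (k + d) - sm f k <= sm g (k + d)) by (apply IHd; intros; apply H; lia). lra. Qed.

Definition basic (p : nat -> nat -> R) :=
  (forall n k, (1 <= n)%nat -> 0 <= p n k) /\
  (forall n k, (1 <= n)%nat -> (k = 0%nat \/ (n < k)%nat) -> p n k = 0) /\
  (forall n, (1 <= n)%nat -> sum_f_R0 (p n) n = 1).

Definition G p t i := 1 - reach p t i.
Definition M p T i := sm (fun t => G p t i) T.
Definition D p T k := M p T (S k) - M p T k.
Definition w p n k := cdfY p n k - cdfY p (S n) k.

Lemma reach_S p t i : reach p (S t) i = sm (fun k => p i k * reach p t k) (S i).
Proof. simpl reach. apply sum_sm. Qed.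

Lemma mass_sm p n : basic p -> (1 <= n)%nat -> sm (p n) (S n) = 1.
Proof. intros (_&_&Hm) Hn. rewrite <- sum_sm. auto. Qed.

Lemma G_S p t i : basic p -> (1 <= i)%nat ->
  G p (S t) i = sm (fun k => p i k * G p t k) (S i).
Proof. intros Hb Hi. unfold G. rewrite reach_S.
 rewrite <- (mass_sm p i Hb Hi) at 1. rewrite <- sm_minus. apply sm_ext; intros; ring. Qed.

Lemma p0 p n : basic p -> (1 <= n)%nat -> p n 0%nat = 0.
Proof. intros (_&H&_) Hn. apply H; auto. Qed.

Lemma G_bounds p t i : basic p -> (1 <= i)%nat -> 0 <= G p t i <= 1.
Proof. intros Hb. revert i. induction t; intros i Hi.
 - unfold G; simpl. destruct (Nat.eqb i 1); lra.
 - rewrite G_S by auto. pose proof (mass_sm p i Hb Hi).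
   destruct Hb as (Hnn&Hs&Hm).
   split.
   + apply sm_nonneg. intros k Hk. destruct k. rewrite Hs; auto; lra.
     apply Rmult_le_pos; auto. apply IHt; lia.
   + rewrite <- H. apply sm_le. intros k Hk. destruct k. rewrite Hs; auto; lra.
     specialize (IHt (S k) ltac:(lia)). specialize (Hnn i (S k) Hi). nra.
Qed.

Lemma reach_1 p t : basic p -> reach p t 1 = 1.
Proof. intros Hb. pose proof (mass_sm p 1 Hb (le_n 1)) as Hm. simpl in Hm.
 rewrite (p0 p 1 Hb (le_n 1)) in Hm.
 induction t. reflexivity. rewrite reach_S. simpl.
 rewrite (p0 p 1 Hb (le_n 1)), IHt. lra. Qed.

Lemma G_1 p t : basic p -> G p t 1 = 0.
Proof. intros Hb. unfold G. rewrite reach_1; auto; ring. Qed.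

Lemma G_dec p t i : basic p -> (1 <= i)%nat -> G p (S t) i <= G p t i.
Proof. intros Hb. revert i. induction t; intros i Hi.
 - destruct (Nat.eq_dec i 1). subst. rewrite !G_1; auto; lra.
   unfold G at 2. simpl. destruct (Nat.eqb_spec i 1); [lia|].
   pose proof (G_bounds p 1 i Hb Hi). lra.
 - rewrite (G_S p (S t)), (G_S p t) by auto. apply sm_le. intros k Hk.
   destruct k. rewrite p0; auto; lra.
   apply Rmult_le_compat_l. destruct Hb; auto. apply IHt; lia.
Qed.

Lemma rho_ex p N : (forall n, (2 <= n)%nat -> p n n < 1) ->
  exists rho, 0 <= rho < 1 /\ forall i, (2 <= i <= N)%nat -> p i i <= rho.
Proof. intros Hn. induction N.
 - exists 0. split. lra. intros; lia.
 - destruct IHN as [r [Hr H]]. destruct (le_lt_dec 2 (S N)).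
   + exists (Rmax r (p (S N) (S N))). split.
     * split. apply Rle_trans with r. lra. apply Rmax_l.
       apply Rmax_lub_lt. lra. apply Hn; auto.
     * intros i Hi. destruct (Nat.eq_dec i (S N)). subst. apply Rmax_r.
       apply Rle_trans with r. apply H; lia. apply Rmax_l.
   + exists r. split; auto. intros; lia.
Qed.

Lemma G_geom p N rho : basic p -> 0 <= rho < 1 ->
  (forall i, (2 <= i <= N)%nat -> p i i <= rho) ->
  forall t i, (1 <= i <= N)%nat -> G p t i <= 2 ^ i * ((1 + rho) / 2) ^ t.
Proof. intros Hb Hr Hrho t. induction t; intros i Hi.
 - simpl. rewrite Rmult_1_r. pose proof (G_bounds p 0 i Hb ltac:(lia)).
   assert (1 <= 2 ^ i) by (apply pow_R1_Rle; lra). lra.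
 - destruct (Nat.eq_dec i 1). subst. rewrite G_1 by auto.
   apply Rmult_le_pos; apply pow_le; lra.
   destruct i as [|j]; [lia|]. rewrite G_S by (auto; lia). rewrite sm_S.
   set (X := 2 ^ j * ((1 + rho) / 2) ^ t).
   assert (HX : 0 <= X) by (unfold X; apply Rmult_le_pos; apply pow_le; lra).
   assert (H1 : sm (fun k => p (S j) k * G p t k) (S j) <= sm (fun k => p (S j) k * X) (S j)).
   { apply sm_le. intros k Hk. destruct k. rewrite p0 by (auto; lia). lra.
     apply Rmult_le_compat_l. destruct Hb; apply H; lia.
     apply Rle_trans with (2 ^ (S k) * ((1 + rho) / 2) ^ t). apply IHt; lia.
     unfold X. apply Rmult_le_compat_r. apply pow_le; lra. apply Rle_pow; [lra|lia]. }
   assert (H2 : sm (fun k => p (S j) k * X) (S j) = X * sm (p (S j)) (S j)).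
   { rewrite <- sm_scal. apply sm_ext; intros; ring. }
   pose proof (mass_sm p (S j) Hb ltac:(lia)) as Hm. rewrite sm_S in Hm.
   assert (Hq : p (S j) (S j) <= rho) by (apply Hrho; lia).
   assert (Hq0 : 0 <= p (S j) (S j)) by (destruct Hb; apply H; lia).
   assert (HG : G p t (S j) <= 2 * X).
   { apply Rle_trans with (2 ^ (S j) * ((1 + rho) / 2) ^ t). apply IHt; lia.
     unfold X; simpl; lra. }
   replace (2 ^ S j * ((1 + rho) / 2) ^ S t) with (X * (1 + rho)) by (unfold X; simpl; field).
   assert (p (S j) (S j) * G p t (S j) <= p (S j) (S j) * (2 * X)) by (apply Rmult_le_compat_l; auto).
   assert (X * p (S j) (S j) <= X * rho) by (apply Rmult_le_compat_l; auto).
   rewrite H2 in H1. replace (sm (p (S j)) (S j)) with (1 - p (S j) (S j)) in H1 by lra.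
   lra.
Qed.

Lemma pmf_sum p n N : sum_f_R0 (pmfX p n) N = 1 - G p N n.
Proof. unfold G. induction N; simpl; [ring|]. rewrite IHN. simpl. ring. Qed.

Lemma tpmf_sum p n N : sum_f_R0 (fun t => INR t * pmfX p n t) N = M p N n - INR N * G p N n.
Proof. induction N.
 - simpl. unfold M. simpl. ring.
 - change (sum_f_R0 (fun t => INR t * pmfX p n t) (S N)) with
     (sum_f_R0 (fun t => INR t * pmfX p n t) N + INR (S N) * (reach p (S N) n - reach p N n)).
   rewrite IHN. unfold M. rewrite sm_S. unfold G. rewrite S_INR. ring. Qed.

Lemma geom_ex p n : basic p -> (forall n, (2 <= n)%nat -> p n n < 1) -> (1 <= n)%nat ->
  exists lam, 0 <= lam < 1 /\ forall t i, (1 <= i <= n)%nat -> G p t i <= 2 ^ n * lam ^ t.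
Proof. intros Hb Hn Hn1. destruct (rho_ex p n Hn) as [r [Hr H]].
 exists ((1 + r) / 2). split. lra. intros t i Hi.
 apply Rle_trans with (2 ^ i * ((1 + r) / 2) ^ t). apply (G_geom p n r); auto.
 apply Rmult_le_compat_r. apply pow_le; lra. apply Rle_pow; [lra|lia]. Qed.

Lemma binom h t : 0 <= h -> 1 + INR t * h + INR t * (INR t - 1) / 2 * h ^ 2 <= (1 + h) ^ t.
Proof. intros Hh. induction t.
 - simpl; lra.
 - rewrite S_INR. simpl pow. simpl pow in IHt.
   assert (0 <= INR t) by apply pos_INR.
   assert (0 <= INR t * (INR t - 1) \/ t = 0%nat).
   { destruct t. right; auto. left. rewrite S_INR. assert (0 <= INR t) by apply pos_INR. nra. }
   assert (0 <= (1 + h) ^ t) by (apply pow_le; lra).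
   destruct H0 as [H0|H0]. 
   + assert (0 <= h * h * h * (INR t * (INR t - 1))) by (apply Rmult_le_pos; auto; repeat apply Rmult_le_pos; auto).
     assert ((1 + h) * (1 + INR t * h + INR t * (INR t - 1) / 2 * h ^ 2) <= (1 + h) * (1 + h) ^ t)
       by (apply Rmult_le_compat_l; lra).
     simpl in H3. nra.
   + subst. simpl. nra. Qed.

Lemma Un_cv_def u l : Un_cv u l <-> forall eps, eps > 0 -> exists N, forall n, (n >= N)%nat -> Rabs (u n - l) < eps.
Proof. reflexivity. Qed.

Lemma tlam lam : 0 <= lam < 1 -> Un_cv (fun t => INR t * lam ^ t) 0.
Proof. intros Hl. apply Un_cv_def. intros eps He. set (h := 1 - lam).
 assert (Hh : 0 < h) by (unfold h; lra).
 destruct (INR_unbounded (2 / (h * h * eps) + 2)) as [N HN].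
 exists N. intros t Ht. rewrite Rminus_0_r.
 assert (HtN : INR N <= INR t) by (apply le_INR; lia).
 assert (Hpos : 0 < 2 / (h * h * eps)) by (apply Rdiv_lt_0_compat; [lra| repeat apply Rmult_lt_0_compat; lra]).
 assert (Ht2 : 2 < INR t) by lra.
 pose proof (binom h t ltac:(lra)) as Hb.
 assert (Hl1 : lam ^ t * (1 + h) ^ t <= 1).
 { rewrite <- Rpow_mult_distr. assert ((lam * (1 + h)) ^ t <= 1 ^ t) by (apply pow_incr; unfold h; nra).
   rewrite pow1 in H. exact H. }
 assert (0 <= lam ^ t) by (apply pow_le; lra).
 rewrite Rabs_right by (apply Rle_ge, Rmult_le_pos; auto; apply pos_INR).
 set (A := (1 + h) ^ t) in *. set (L := lam ^ t) in *.
 assert (HA : INR t * (INR t - 1) / 2 * h ^ 2 <= A).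
 { assert (0 <= INR t * h) by (apply Rmult_le_pos; [apply pos_INR|lra]). lra. }
 assert (Hk : 2 / (h * h * eps) * (h * h * eps) = 2) by (field; split; lra).
 apply Rnot_le_lt. intro Hc.
 (* t >= t L A >= eps * A >= eps * t (t-1) h^2 / 2 *)
 assert (H1 : INR t * L * A <= INR t) by (assert (0 <= INR t) by apply pos_INR; nra).
 assert (H2 : eps * A <= INR t * L * A) by (apply Rmult_le_compat_r; [unfold A; apply pow_le; lra| lra]).
 assert (H3 : eps * (INR t * (INR t - 1) / 2 * h ^ 2) <= eps * A) by (apply Rmult_le_compat_l; lra).
 assert (H4 : eps * (INR t - 1) * h ^ 2 <= 2) by nra.
 assert (H5 : 2 / (h * h * eps) < INR t - 1) by lra.
 assert (H6 : 2 / (h * h * eps) * (h * h * eps) < (INR t - 1) * (h * h * eps)).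
 { apply Rmult_lt_compat_r; [repeat apply Rmult_lt_0_compat; lra| lra]. }
 simpl in H4. nra.
Qed.

Lemma sm_geom x T : 0 <= x < 1 -> sm (fun t => x ^ t) T <= 1 / (1 - x).
Proof. intros Hx. assert (E : sm (fun t => x ^ t) T * (1 - x) = 1 - x ^ T).
 { induction T; simpl; [ring|]. rewrite Rmult_plus_distr_r, IHT. ring. }
 assert (0 <= x ^ T) by (apply pow_le; lra).
 apply (Rmult_le_reg_r (1 - x)). lra. rewrite E. unfold Rdiv. rewrite Rmult_1_l, Rinv_l; lra. Qed.

Lemma M_nonneg p T i : basic p -> (1 <= i)%nat -> 0 <= M p T i.
Proof. intros Hb Hi. apply sm_nonneg. intros; apply G_bounds; auto. Qed.

Lemma M_bound p n lam Cst : (forall t, G p t n <= Cst * lam ^ t) -> 0 <= lam < 1 -> 0 <= Cst ->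
  forall T, M p T n <= Cst / (1 - lam).
Proof. intros H Hl HC T. unfold M. apply Rle_trans with (sm (fun t => Cst * lam ^ t) T).
 apply sm_le; auto. rewrite sm_scal. unfold Rdiv. rewrite <- (Rmult_1_l (/ (1 - lam))).
 apply Rmult_le_compat_l. auto. apply (sm_geom lam T Hl). Qed.

Lemma M_cv p n : basic p -> (forall n, (2 <= n)%nat -> p n n < 1) -> (1 <= n)%nat ->
  exists l, Un_cv (fun T => M p T n) l.
Proof. intros Hb Hn Hn1. destruct (geom_ex p n Hb Hn Hn1) as [lam [Hl H]].
 assert (Hg : Un_growing (fun T => M p T n)).
 { intro T. unfold M. simpl. pose proof (G_bounds p T n Hb Hn1). lra. }
 assert (Hu : has_ub (fun T => M p T n)).
 { exists (2 ^ n / (1 - lam)). intros x [i ->]. apply M_bound; [intros; apply H; lia | auto | apply pow_le; lra]. }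
 destruct (growing_cv _ Hg Hu) as [l Hl']. exists l; auto. Qed.

Lemma squeeze0 a b c : (forall N, 0 <= a N <= c * b N) -> Un_cv b 0 -> Un_cv a 0.
Proof. intros H Hb. rewrite Un_cv_def in *. intros eps He.
 destruct (Hb (eps / (Rabs c + 1))) as [N HN].
 apply Rdiv_lt_0_compat; [lra| pose proof (Rabs_pos c); lra].
 exists N. intros n Hn. specialize (HN n Hn). specialize (H n). rewrite Rminus_0_r in *.
 rewrite Rabs_right by lra.
 assert (c * b n <= (Rabs c + 1) * Rabs (b n)).
 { apply Rle_trans with (Rabs (c * b n)). apply RRle_abs. rewrite Rabs_mult.
   apply Rmult_le_compat_r. apply Rabs_pos. lra. }
 assert ((Rabs c + 1) * Rabs (b n) < (Rabs c + 1) * (eps / (Rabs c + 1))).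
 { apply Rmult_lt_compat_l. pose proof (Rabs_pos c); lra. auto. }
 replace ((Rabs c + 1) * (eps / (Rabs c + 1))) with eps in H1 by (field; pose proof (Rabs_pos c); lra).
 lra. Qed.

Lemma part1 p n l : basic p -> (forall n, (2 <= n)%nat -> p n n < 1) -> (1 <= n)%nat ->
  Un_cv (fun T => M p T n) l ->
  infinite_sum (pmfX p n) 1 /\ infinite_sum (fun t => INR t * pmfX p n t) l.
Proof. intros Hb Hn Hn1 Hl. destruct (geom_ex p n Hb Hn Hn1) as [lam [Hlam H]].
 assert (HG : Un_cv (fun N => G p N n) 0).
 { apply squeeze0 with (b := fun t => lam ^ t) (c := 2 ^ n).
   intro N. split. apply G_bounds; auto. apply H; lia.
   rewrite Un_cv_def. intros eps He. destruct (pow_lt_1_zero lam ltac:(rewrite Rabs_right; lra) eps He) as [N HN].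
   exists N. intros. rewrite Rminus_0_r. auto. }
 split.
 - unfold infinite_sum. intros eps He. destruct (HG eps He) as [N HN]. exists N. intros m Hm.
   specialize (HN m Hm). unfold R_dist in *. rewrite pmf_sum.
   replace (1 - G p m n - 1) with (- (G p m n - 0)) by ring. rewrite Rabs_Ropp. auto.
 - assert (HNG : Un_cv (fun N => INR N * G p N n) 0).
   { apply squeeze0 with (b := fun t => INR t * lam ^ t) (c := 2 ^ n).
     intro N. pose proof (pos_INR N). pose proof (G_bounds p N n Hb Hn1). split. nra.
     specialize (H N n ltac:(lia)). nra. apply tlam; auto. }
   unfold infinite_sum. intros eps He. 
   pose proof (CV_minus _ _ _ _ Hl HNG) as Hc. destruct (Hc eps He) as [N HN]. exists N. intros m Hm.
   specialize (HN m Hm). rewrite tpmf_sum. rewrite Rminus_0_r in HN. exact HN.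
Qed.

Lemma abel q g m : sm (fun k => q k * g k) (S m) =
  sm q (S m) * g m - sm (fun k => sm q (S k) * (g (S k) - g k)) m.
Proof. induction m.
 - simpl. ring.
 - rewrite sm_S, IHm. rewrite (sm_S (fun k => sm q (S k) * (g (S k) - g k)) m).
   rewrite (sm_S q (S m)). ring. Qed.

Lemma cdf_sm p n k : cdfY p n k = sm (p n) (S k).
Proof. unfold cdfY. apply sum_sm. Qed.

Lemma abel_diff p g n : basic p -> (1 <= n)%nat ->
  sm (fun k => p (S n) k * g k) (S (S n)) - sm (fun k => p n k * g k) (S n) =
  sm (fun k => w p n k * (g (S k) - g k)) (S n).
Proof. intros Hb Hn. rewrite (abel (p (S n)) g (S n)), (abel (p n) g n). rewrite (mass_sm p (S n) Hb ltac:(lia)), (mass_sm p n Hb Hn).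
 unfold w. rewrite (sm_ext (fun k => (cdfY p n k - cdfY p (S n) k) * (g (S k) - g k))
   (fun k => sm (p n) (S k) * (g (S k) - g k) - sm (p (S n)) (S k) * (g (S k) - g k))).
 2:{ intros. rewrite !cdf_sm. ring. }
 rewrite sm_minus. rewrite (sm_S (fun k => sm (p n) (S k) * (g (S k) - g k)) n).
 rewrite (mass_sm p n Hb Hn). ring. Qed.

Lemma w0 p n : basic p -> (1 <= n)%nat -> w p n 0 = 0.
Proof. intros Hb Hn. unfold w, cdfY. simpl. rewrite !p0; auto; try lra; lia. Qed.

Definition monoH p := forall n k, (1 <= n)%nat -> (1 <= k)%nat -> cdfY p (S n) k <= cdfY p n k.

Lemma w_nonneg p n k : basic p -> monoH p -> (1 <= n)%nat -> 0 <= w p n k.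
Proof. intros Hb Hm Hn. destruct k. rewrite w0; auto; lra.
 unfold w. specialize (Hm n (S k) Hn ltac:(lia)). lra. Qed.

Lemma G_diff p t n : basic p -> (1 <= n)%nat ->
  G p (S t) (S n) - G p (S t) n = sm (fun k => w p n k * (G p t (S k) - G p t k)) (S n).
Proof. intros Hb Hn. rewrite !G_S by (auto; lia). apply abel_diff; auto. Qed.

Lemma G0_diff p n : (1 <= n)%nat -> 0 <= G p 0 (S n) - G p 0 n.
Proof. intros Hn. unfold G. simpl. destruct n. lia. destruct n; simpl; lra. Qed.

Lemma G0_diff2 p n : (2 <= n)%nat -> G p 0 (S n) - G p 0 n = 0.
Proof. intros Hn. unfold G. simpl. destruct n. lia. destruct n. lia. simpl; lra. Qed.

Lemma G_mono p t n : basic p -> monoH p -> (1 <= n)%nat -> G p t n <= G p t (S n).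
Proof. intros Hb Hm. revert n. induction t; intros n Hn.
 - pose proof (G0_diff p n Hn); lra.
 - assert (0 <= G p (S t) (S n) - G p (S t) n); [|lra].
   rewrite G_diff by auto. apply sm_nonneg. intros k Hk. destruct k. rewrite w0; auto; lra.
   apply Rmult_le_pos. apply w_nonneg; auto. assert (G p t (S k) <= G p t (S (S k))) by (apply IHt; lia). lra.
Qed.

Lemma G_mono_le p t n m : basic p -> monoH p -> (1 <= n <= m)%nat -> G p t n <= G p t m.
Proof. intros Hb Hm [H1 H2]. induction H2. lra. apply Rle_trans with (G p t m); auto. apply G_mono; auto; lia. Qed.

Lemma M_S p T i : basic p -> (1 <= i)%nat ->
  M p (S T) i = G p 0 i + sm (fun k => p i k * M p T k) (S i).
Proof. intros Hb Hi. induction T.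
 - unfold M. simpl sm at 1. rewrite (sm_ext _ (fun _ => 0)). rewrite sm_const. ring.
   intros; simpl; ring.
 - unfold M at 1. rewrite sm_S. fold (M p (S T) i). rewrite IHT. rewrite G_S by auto.
   rewrite Rplus_assoc, <- sm_plus. f_equal. apply sm_ext. intros. unfold M. rewrite sm_S. ring. Qed.

Lemma D_S p T n : basic p -> (1 <= n)%nat ->
  D p (S T) n = (G p 0 (S n) - G p 0 n) + sm (fun k => w p n k * D p T k) (S n).
Proof. intros Hb Hn. pose proof (abel_diff p (M p T) n Hb Hn) as E. unfold D.
 rewrite (M_S p T (S n)), (M_S p T n) by (auto; lia). rewrite <- E. ring. Qed.

Lemma D_nonneg p T n : basic p -> monoH p -> (1 <= n)%nat -> 0 <= D p T n.
Proof. intros Hb Hm Hn. unfold D, M. rewrite <- sm_minus. apply sm_nonneg. intros.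
 pose proof (G_mono p k n Hb Hm Hn). lra. Qed.

Lemma EY_diff p n : basic p -> (1 <= n)%nat -> EY p (S n) - EY p n = sm (w p n) (S n).
Proof. intros Hb Hn. unfold EY. rewrite !sum_sm.
 rewrite (sm_ext (fun k => INR k * p (S n) k) (fun k => p (S n) k * INR k)) by (intros; ring).
 rewrite (sm_ext (fun k => INR k * p n k) (fun k => p n k * INR k)) by (intros; ring).
 rewrite abel_diff by auto. apply sm_ext. intros. rewrite S_INR. ring. Qed.

Lemma D_M p T n : D p T n = sm (fun t => G p t (S n) - G p t n) T.
Proof. unfold D, M. rewrite sm_minus. auto. Qed.

Lemma Rpower_pos x y : 0 < Rpower x y.
Proof. unfold Rpower. apply exp_pos. Qed.

Lemma Rpower_anti x y s : 0 < x -> x <= y -> 0 <= s -> Rpower y (- s) <= Rpower x (- s).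
Proof. intros Hx Hxy Hs. unfold Rpower. destruct (Req_dec x y). subst; lra.
 destruct (Req_dec s 0). subst. rewrite Ropp_0, !Rmult_0_l. lra.
 apply Rlt_le. apply exp_increasing. assert (ln x < ln y) by (apply ln_increasing; lra).
 nra. Qed.

Lemma ln_ge_1m x y : 0 < x -> 0 < y -> ln y - ln x >= (y - x) / y.
Proof. intros Hx Hy. pose proof (exp_ineq1_le (ln x - ln y)).
 unfold Rminus in H. rewrite exp_plus, exp_Ropp, !exp_ln in H by auto.
 assert (x / y = x * / y) by reflexivity.
 apply Rle_ge. unfold Rdiv. 
 replace ((y - x) * / y) with (1 - x / y) by (field; lra). lra. Qed.

Lemma Rpower_m1 v : 0 < v -> Rpower v (-1) = / v.
Proof. intros. replace (-1) with (Ropp 1) by ring. rewrite Rpower_Ropp, Rpower_1; auto. Qed.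

Lemma Rpower_convex u v s : 0 < u -> u < v -> 0 < s ->
  Rpower u (- s) - Rpower v (- s) >= s * (v - u) * Rpower v (- s - 1).
Proof. intros Hu Huv Hs. unfold Rminus at 3. rewrite Rpower_plus, Rpower_m1 by lra.
 assert (E : Rpower u (- s) = Rpower v (- s) * exp (s * (ln v - ln u))).
 { unfold Rpower. rewrite <- exp_plus. f_equal. ring. }
 rewrite E. pose proof (exp_ineq1_le (s * (ln v - ln u))) as H1.
 pose proof (ln_ge_1m u v Hu ltac:(lra)) as H2.
 pose proof (Rpower_pos v (- s)) as H3.
 assert (H4 : s * (ln v - ln u) >= s * ((v - u) / v)) by (apply Rle_ge, Rmult_le_compat_l; lra).
 assert (H6 : (v - u) / v = (v - u) * / v) by reflexivity.
 assert (H5 : Rpower v (- s) * exp (s * (ln v - ln u)) >= Rpower v (- s) * (1 + s * ((v - u) / v))).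
 { apply Rle_ge, Rmult_le_compat_l; lra. }
 rewrite H6 in H5. nra. Qed.

Lemma ln_nonneg x : 1 <= x -> 0 <= ln x.
Proof. intros. destruct (Req_dec x 1). subst. rewrite ln_1; lra.
 rewrite <- ln_1. apply Rlt_le. apply ln_increasing; lra. Qed.

Lemma Rpower_small x s : 1 <= x -> 0 < s -> Rpower x (- s) <= 1 / (1 + s * ln x).
Proof. intros Hx Hs. pose proof (ln_nonneg x Hx).
 rewrite Rpower_Ropp. unfold Rpower. pose proof (exp_ineq1_le (s * ln x)).
 assert (0 < 1 + s * ln x) by nra. unfold Rdiv. rewrite Rmult_1_l.
 apply Rinv_le_contravar; auto. Qed.

Lemma Rpower_le1 x s : 1 <= x -> 0 <= s -> Rpower x (- s) <= 1.
Proof. intros Hx Hs. pose proof (ln_nonneg x Hx). unfold Rpower.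
 assert (H0 : - s * ln x <= 0) by nra. rewrite <- exp_0.
 destruct (Rle_lt_or_eq_dec _ _ H0) as [H1|H1]. apply Rlt_le. apply exp_increasing; auto.
 rewrite H1; lra. Qed.

Lemma Rpower_1eps y e : 1 <= y -> 0 <= e -> Rpower y (-1 - e) <= / y.
Proof. intros. replace (-1 - e) with (-1 + - e) by ring. rewrite Rpower_plus, Rpower_m1 by lra.
 pose proof (Rpower_le1 y e H H0). assert (0 < / y) by (apply Rinv_0_lt_compat; lra). nra. Qed.

Lemma Rpower_2eps n e : 0 < n -> Rpower n (-2 - e) = Rpower n (- e) / (n * n).
Proof. intros. replace (-2 - e) with (- (INR 2) + - e) by (simpl; ring).
 rewrite Rpower_plus, Rpower_Ropp, Rpower_pow by auto. simpl. field. lra. Qed.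

Definition Tf K1 a e x := 1 - K1 * Rpower (ln x) (- e) - a * Rpower x (- e).

Lemma Tf_le1 K1 a e x : 0 <= K1 -> 0 <= a -> Tf K1 a e x <= 1.
Proof. intros. unfold Tf. pose proof (Rpower_pos (ln x) (- e)). pose proof (Rpower_pos x (- e)). nra. Qed.

Lemma ln_pos' x : 1 < x -> 0 < ln x.
Proof. intros. rewrite <- ln_1. apply ln_increasing; lra. Qed.

Lemma Tf_mono K1 a e x y : 0 <= K1 -> 0 <= a -> 0 < e -> 1 < x -> x <= y -> Tf K1 a e x <= Tf K1 a e y.
Proof. intros. unfold Tf. pose proof (ln_pos' x H2).
 assert (ln x <= ln y) by (destruct (Req_dec x y); [subst; lra| apply Rlt_le, ln_increasing; lra]).
 pose proof (Rpower_anti (ln x) (ln y) e H4 H5 ltac:(lra)).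
 pose proof (Rpower_anti x y e ltac:(lra) H3 ltac:(lra)).
 assert (K1 * Rpower (ln y) (- e) <= K1 * Rpower (ln x) (- e)) by (apply Rmult_le_compat_l; auto).
 assert (a * Rpower y (- e) <= a * Rpower x (- e)) by (apply Rmult_le_compat_l; auto).
 lra. Qed.

Lemma Tf_gap K1 a e b x : 0 <= K1 -> 0 <= a -> 0 < e -> 0 < b < 1 -> 1 < b * x ->
  Tf K1 a e x - Tf K1 a e (b * x) >=
  K1 * (e * (- ln b) * Rpower (ln x) (- e - 1)) + a * (Rpower b (- e) - 1) * Rpower x (- e).
Proof. intros HK Ha He Hb Hbx. assert (Hx : 0 < x) by nra.
 unfold Tf. rewrite ln_mult by lra. rewrite <- Rpower_mult_distr by lra.
 assert (Hlb : ln b < 0) by (rewrite <- ln_1; apply ln_increasing; lra).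
 pose proof (ln_pos' (b * x) Hbx). rewrite ln_mult in H by lra.
 pose proof (Rpower_convex (ln b + ln x) (ln x) e H ltac:(lra) He).
 replace (ln x - (ln b + ln x)) with (- ln b) in H0 by ring.
 assert (K1 * (Rpower (ln b + ln x) (- e) - Rpower (ln x) (- e)) >= K1 * (e * - ln b * Rpower (ln x) (- e - 1))).
 { apply Rle_ge, Rmult_le_compat_l; lra. }
 lra. Qed.

Lemma Rpower_gt1 b e : 0 < b < 1 -> 0 < e -> 1 < Rpower b (- e).
Proof. intros. unfold Rpower. rewrite <- exp_0. apply exp_increasing.
 assert (ln b < 0) by (rewrite <- ln_1; apply ln_increasing; lra). nra. Qed.

Lemma Rabs_maj2 x : - x <= Rabs x.
Proof. rewrite <- Rabs_Ropp. apply Rle_abs. Qed.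
Lemma Rabs_maj1 x : x <= Rabs x.
Proof. apply Rle_abs. Qed.

Definition gdev p alpha dn n j :=
  if Rlt_dec (dn * INR n) (Rabs (INR j - alpha * INR n)) then p n j else 0.

Lemma devY_sm p alpha dn n : devY p alpha dn n = sm (gdev p alpha dn n) (S n).
Proof. unfold devY. rewrite sum_sm. reflexivity. Qed.

Lemma gdev_nonneg p alpha dn n j : basic p -> (1 <= n)%nat -> 0 <= gdev p alpha dn n j.
Proof. intros Hb Hn. unfold gdev. destruct Rlt_dec. destruct Hb; auto. lra. Qed.

Lemma devlow p alpha dn n k : basic p -> (1 <= n)%nat -> (k <= n)%nat ->
  INR k < (alpha - Rabs dn) * INR n -> cdfY p n k <= devY p alpha dn n.
Proof. intros Hb Hn Hk Hlt. rewrite cdf_sm, devY_sm.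
 apply Rle_trans with (sm (gdev p alpha dn n) (S k)).
 - apply sm_le. intros j Hj. unfold gdev. destruct Rlt_dec as [_|Hc]. lra. exfalso. apply Hc.
   assert (INR j <= INR k) by (apply le_INR; lia). pose proof (Rabs_maj2 (INR j - alpha * INR n)).
   pose proof (Rle_abs dn). pose proof (pos_INR n). nra.
 - apply sm_mono_n. intros; apply gdev_nonneg; auto. lia. Qed.

Lemma devhigh p alpha dn m k : basic p -> (1 <= m)%nat -> (k < m)%nat ->
  (alpha + Rabs dn) * INR m <= INR k -> 1 - cdfY p m k <= devY p alpha dn m.
Proof. intros Hb Hm Hk Hle. rewrite cdf_sm, devY_sm. rewrite <- (mass_sm p m Hb Hm).
 apply sm_tail_le. lia. intros; apply gdev_nonneg; auto.
 intros j Hj. unfold gdev. destruct Rlt_dec as [_|Hc]. lra. exfalso. apply Hc.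
 assert (INR k + 1 <= INR j) by (rewrite <- S_INR; apply le_INR; lia).
 pose proof (Rabs_maj1 (INR j - alpha * INR m)).
 pose proof (Rle_abs dn). pose proof (pos_INR m). nra. Qed.

Lemma cdf_nonneg p n k : basic p -> (1 <= n)%nat -> 0 <= cdfY p n k.
Proof. intros Hb Hn. rewrite cdf_sm. apply sm_nonneg. intros; destruct Hb; auto. Qed.

Lemma cdf_le1 p n k : basic p -> (1 <= n)%nat -> (k <= n)%nat -> cdfY p n k <= 1.
Proof. intros Hb Hn Hk. rewrite cdf_sm. rewrite <- (mass_sm p n Hb Hn). apply sm_mono_n.
 intros; destruct Hb; auto. lia. Qed.

Lemma w_le_cdf p n k : basic p -> (1 <= n)%nat -> w p n k <= cdfY p n k.
Proof. intros. unfold w. pose proof (cdf_nonneg p (S n) k H ltac:(lia)). lra. Qed.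

Lemma w_le_tail p n k : basic p -> (1 <= n)%nat -> (k <= n)%nat -> w p n k <= 1 - cdfY p (S n) k.
Proof. intros. unfold w. pose proof (cdf_le1 p n k H H0 H1). lra. Qed.

Definition ev (P : nat -> Prop) := exists N, forall n, (N <= n)%nat -> P n.

Lemma ev_and P Q : ev P -> ev Q -> ev (fun n => P n /\ Q n).
Proof. intros [N1 H1] [N2 H2]. exists (Nat.max N1 N2). intros n Hn. split; [apply H1|apply H2]; lia. Qed.

Lemma ev_shift P : ev P -> ev (fun n => P (S n)).
Proof. intros [N H]. exists N. intros; apply H; lia. Qed.

Lemma ev_INR R : ev (fun n => R <= INR n).
Proof. destruct (INR_unbounded R) as [N HN]. exists N. intros n Hn.
 assert (INR N <= INR n) by (apply le_INR; lia). lra. Qed.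

Lemma ev_ge N0 : ev (fun n => (N0 <= n)%nat).
Proof. exists N0; auto. Qed.

Lemma ev_ln R : ev (fun n => R <= ln (INR n)).
Proof. destruct (ev_INR (exp R)) as [N HN]. exists N. intros n Hn. specialize (HN n Hn).
 rewrite <- (ln_exp R). pose proof (exp_pos R).
 destruct (Req_dec (exp R) (INR n)). rewrite H0; lra. apply Rlt_le, ln_increasing; lra. Qed.

Lemma ev_delta (delta : nat -> R) eps dd : 0 <= eps -> 0 < dd ->
  (exists C N, forall n, (N <= n)%nat -> Rabs (delta n) <= C * Rpower (ln (INR n)) (-1 - eps)) ->
  ev (fun n => Rabs (delta n) <= dd).
Proof. intros He Hd [C [N H]]. destruct (ev_ln (Rmax 1 (Rabs C / dd))) as [N2 H2].
 exists (Nat.max N N2). intros n Hn. specialize (H n ltac:(lia)). specialize (H2 n ltac:(lia)).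
 pose proof (Rmax_l 1 (Rabs C / dd)). pose proof (Rmax_r 1 (Rabs C / dd)).
 set (y := ln (INR n)) in *.
 pose proof (Rpower_1eps y eps ltac:(lra) He). pose proof (Rpower_pos y (-1 - eps)).
 assert (C * Rpower y (-1 - eps) <= Rabs C * / y).
 { apply Rle_trans with (Rabs C * Rpower y (-1 - eps)). apply Rmult_le_compat_r. lra. apply Rle_abs.
   apply Rmult_le_compat_l. apply Rabs_pos. auto. }
 assert (Rabs C / dd * dd = Rabs C) by (field; lra).
 assert (Rabs C <= dd * y) by nra.
 assert (Rabs C * / y <= dd).
 { apply (Rmult_le_reg_r y). lra. rewrite Rmult_assoc, Rinv_l by lra. lra. }
 lra. Qed.

Lemma Tf_n0 K1 a e : 0 <= K1 -> 0 <= a -> 0 < e ->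
  exists n0 : nat, 2 <= INR n0 /\ 1/2 <= Tf K1 a e (INR n0).
Proof. intros HK Ha He.
 destruct (ev_and _ _ (ev_ln (Rmax (Rmax 1 (exp (4 * K1 / e))) (4 * a / e))) (ev_INR 2)) as [N HN].
 exists N. destruct (HN N (le_n N)) as [H1 H2]. split; auto.
 set (x := INR N) in *.
 pose proof (Rmax_l (Rmax 1 (exp (4 * K1 / e))) (4 * a / e)).
 pose proof (Rmax_r (Rmax 1 (exp (4 * K1 / e))) (4 * a / e)).
 pose proof (Rmax_l 1 (exp (4 * K1 / e))). pose proof (Rmax_r 1 (exp (4 * K1 / e))).
 assert (Hl1 : 1 <= ln x) by lra.
 assert (Hll : 4 * K1 / e <= ln (ln x)).
 { rewrite <- (ln_exp (4 * K1 / e)). pose proof (exp_pos (4 * K1 / e)).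
   destruct (Req_dec (exp (4 * K1 / e)) (ln x)) as [He5|He5]. rewrite He5; lra. apply Rlt_le. apply ln_increasing; lra. }
 pose proof (Rpower_small (ln x) e Hl1 He) as A1.
 pose proof (Rpower_small x e ltac:(lra) He) as A2.
 assert (E1 : 4 * K1 / e * e = 4 * K1) by (field; lra).
 assert (E2 : 4 * a / e * e = 4 * a) by (field; lra).
 assert (B1 : 4 * K1 <= e * ln (ln x)) by nra.
 assert (B2 : 4 * a <= e * ln x) by nra.
 assert (C1 : K1 * Rpower (ln x) (- e) <= 1/4).
 { apply Rle_trans with (K1 * (1 / (1 + e * ln (ln x)))). apply Rmult_le_compat_l; auto.
   unfold Rdiv. rewrite Rmult_1_l. apply (Rmult_le_reg_r (1 + e * ln (ln x))). nra.
   rewrite Rmult_assoc, Rinv_l by nra. nra. }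
 assert (C2 : a * Rpower x (- e) <= 1/4).
 { apply Rle_trans with (a * (1 / (1 + e * ln x))). apply Rmult_le_compat_l; auto.
   unfold Rdiv. rewrite Rmult_1_l. apply (Rmult_le_reg_r (1 + e * ln x)). nra.
   rewrite Rmult_assoc, Rinv_l by nra. nra. }
 unfold Tf. lra. Qed.

Lemma D_le_M p T n : basic p -> (1 <= n)%nat -> D p T n <= M p T (S n).
Proof. intros. unfold D. pose proof (M_nonneg p T n H H0). lra. Qed.

Lemma D0 p n : D p 0 n = 0.
Proof. unfold D, M. simpl. ring. Qed.

Theorem D_bound p alpha eps delta :
  basic p -> (forall n, (2 <= n)%nat -> p n n < 1) -> monoH p -> 0 < alpha < 1 -> 0 < eps ->
  (exists C N, forall n, (N <= n)%nat -> Rabs (delta n) <= C * Rpower (ln (INR n)) (-1 - eps)) ->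
  (exists C N, forall n, (N <= n)%nat -> Rabs (EY p (S n) - EY p n - alpha) <= C * Rabs (delta n)) ->
  (exists C N, forall n, (N <= n)%nat -> devY p alpha (delta n) n <= C * Rpower (INR n) (-2 - eps)) ->
  exists K, 0 <= K /\ forall n T, (1 <= n)%nat -> INR n * D p T n <= K.
Proof.
 intros Hb Hnn Hmo Hal He Hdel [Cm0 [Nm Hm]] [Cc0 [Nc Hc]].
 pose proof Hdel as [Cd0 [Nd Hd]].
 set (Cm := Rabs Cm0). set (Cc := Rabs Cc0). set (Cd := Rabs Cd0).
 assert (HCm : 0 <= Cm) by apply Rabs_pos. assert (HCc : 0 <= Cc) by apply Rabs_pos.
 assert (HCd : 0 <= Cd) by apply Rabs_pos.
 assert (Hm' : forall n, (Nm <= n)%nat -> EY p (S n) - EY p n <= alpha + Cm * Rabs (delta n)).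
 { intros n Hn. specialize (Hm n Hn). pose proof (Rle_abs (EY p (S n) - EY p n - alpha)).
   assert (Cm0 * Rabs (delta n) <= Cm * Rabs (delta n)) by (apply Rmult_le_compat_r; [apply Rabs_pos| apply Rle_abs]).
   lra. }
 assert (Hc' : forall n, (Nc <= n)%nat -> devY p alpha (delta n) n <= Cc * Rpower (INR n) (-2 - eps)).
 { intros n Hn. specialize (Hc n Hn). pose proof (Rpower_pos (INR n) (-2 - eps)).
   assert (Cc0 * Rpower (INR n) (-2 - eps) <= Cc * Rpower (INR n) (-2 - eps)) by (apply Rmult_le_compat_r; [lra| apply Rle_abs]).
   lra. }
 assert (Hd' : forall n, (Nd <= n)%nat -> Rabs (delta n) <= Cd * Rpower (ln (INR n)) (-1 - eps)).
 { intros n Hn. specialize (Hd n Hn). pose proof (Rpower_pos (ln (INR n)) (-1 - eps)).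
   assert (Cd0 * Rpower (ln (INR n)) (-1 - eps) <= Cd * Rpower (ln (INR n)) (-1 - eps)) by (apply Rmult_le_compat_r; [lra| apply Rle_abs]).
   lra. }
 clear Hm Hc Hd.
 set (beta := (1 + alpha) / 2).
 assert (Hbeta : 0 < beta < 1) by (unfold beta; lra).
 set (L := - ln beta).
 assert (HL : 0 < L) by (unfold L; assert (ln beta < 0) by (rewrite <- ln_1; apply ln_increasing; lra); lra).
 set (c := 2 * (Cm + 1) / alpha).
 assert (Hcp : 0 <= c) by (unfold c; apply Rmult_le_pos; [lra| apply Rlt_le, Rinv_0_lt_compat; lra]).
 set (K1 := c * Cd / (eps * L)).
 assert (HK1 : 0 <= K1) by (unfold K1; apply Rmult_le_pos; [nra| apply Rlt_le, Rinv_0_lt_compat; nra]).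
 pose proof (Rpower_gt1 beta eps Hbeta He) as Hbg.
 set (a := 2 * Cc / (Rpower beta (- eps) - 1)).
 assert (Ha : 0 <= a) by (unfold a; apply Rmult_le_pos; [lra| apply Rlt_le, Rinv_0_lt_compat; lra]).
 destruct (Tf_n0 K1 a eps HK1 Ha He) as [n0 [Hn0 HTn0]].
 set (TF := Tf K1 a eps).
 assert (TFle1 : forall x, TF x <= 1) by (intros; apply Tf_le1; auto).
 assert (TFmono : forall x y, INR n0 <= x -> x <= y -> TF x <= TF y) by (intros; apply Tf_mono; auto; lra).
 destruct (ev_and _ _ (ev_delta delta eps (Rmin (alpha / 2) ((1 - alpha) / 8)) ltac:(lra) ltac:(apply Rmin_glb_lt; lra) Hdel)
   (ev_and _ _ (ev_shift _ (ev_delta delta eps ((1 - alpha) / 8) ltac:(lra) ltac:(lra) Hdel))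
   (ev_and _ _ (ev_INR (Rmax (16 / (1 - alpha)) (2 * INR n0 / alpha)))
     (ev_ge (Nd + Nm + Nc + 2))))) as [n1 Hn1].
 destruct (geom_ex p (S n1) Hb Hnn ltac:(lia)) as [lam [Hlam Hgeo]].
 set (B0 := 2 ^ (S n1) / (1 - lam)).
 assert (HB0 : forall T i, (1 <= i <= S n1)%nat -> M p T i <= B0).
 { intros T i Hi. apply M_bound; [intros; apply Hgeo; lia | auto | apply pow_le; lra]. }
 assert (HB0p : 0 <= B0) by (unfold B0; apply Rmult_le_pos; [apply pow_le; lra| apply Rlt_le, Rinv_0_lt_compat; lra]).
 set (K := 2 * INR n1 * B0).
 assert (HK : 0 <= K) by (unfold K; pose proof (pos_INR n1); nra).
 assert (TFmax : forall n, 1/2 <= TF (Rmax (INR n) (INR n0))) by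
   (intros; apply Rle_trans with (TF (INR n0)); auto; apply TFmono; [lra| apply Rmax_r]).
 assert (Main : forall N n, (n <= N)%nat -> (1 <= n)%nat -> forall T, INR n * D p T n <= K * TF (Rmax (INR n) (INR n0))).
 2:{ exists K. split; auto. intros n T Hn. apply Rle_trans with (K * TF (Rmax (INR n) (INR n0))).
     apply (Main n n (le_n n) Hn T). rewrite <- Rmult_1_r. apply Rmult_le_compat_l; auto. }
 induction N as [|N IH].
 { intros; lia. }
 intros n HnN Hn1' T.
 destruct (le_lt_dec n N) as [HnN'|HnN']. apply IH; auto.
 assert (n = S N) by lia. subst n. clear HnN HnN'. set (n := S N) in *.
 assert (IHk : forall k T, (1 <= k < n)%nat -> INR k * D p T k <= K * TF (Rmax (INR k) (INR n0))).
 { intros k T' Hk. apply IH; lia. }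
 clear IH.
 destruct (le_lt_dec n n1) as [Hsmall|Hbig].
 -
   apply Rle_trans with (K / 2).
   + apply Rle_trans with (INR n1 * B0). 
     pose proof (D_nonneg p T n Hb Hmo Hn1'). pose proof (D_le_M p T n Hb Hn1').
     assert (M p T (S n) <= B0) by (apply HB0; lia).
     assert (INR n <= INR n1) by (apply le_INR; auto). pose proof (pos_INR n). nra.
     unfold K. lra.
   + specialize (TFmax n). nra.
 -
   destruct (Hn1 n ltac:(lia)) as [Hdn [Hdn1 [Hnbig Hnge]]].
   pose proof (Rmin_l (alpha / 2) ((1 - alpha) / 8)). pose proof (Rmin_r (alpha / 2) ((1 - alpha) / 8)).
   pose proof (Rmax_l (16 / (1 - alpha)) (2 * INR n0 / alpha)). pose proof (Rmax_r (16 / (1 - alpha)) (2 * INR n0 / alpha)).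
   set (d := Rabs (delta n)) in *. set (d1 := Rabs (delta (S n))) in *.
   assert (Hd0 : 0 <= d) by apply Rabs_pos. assert (Hd10 : 0 <= d1) by apply Rabs_pos.
   set (x := INR n) in *.
   assert (Hx2 : 2 * INR n0 <= alpha * x).
   { assert (2 * INR n0 / alpha * alpha = 2 * INR n0) by (field; lra). nra. }
   assert (Hx16 : 16 <= (1 - alpha) * x).
   { assert (16 / (1 - alpha) * (1 - alpha) = 16) by (field; lra). nra. }
   assert (Hxpos : 2 <= x) by nra.
   assert (Hxn0 : INR n0 <= x) by nra.
   assert (HmaxN : Rmax x (INR n0) = x) by (apply Rmax_left; lra).
   rewrite HmaxN.
   assert (Hbx : INR n0 <= beta * x) by (unfold beta; nra).
   assert (HC2 : (alpha + d1) * INR (S n) <= beta * x).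
   { rewrite S_INR. fold x. unfold beta. nra. }
   set (tau := TF (beta * x)).
   assert (Htau0 : 1/2 <= tau) by (apply Rle_trans with (TF (INR n0)); [auto | apply TFmono; lra]).
   assert (Htau1 : tau <= 1) by apply TFle1.
   set (E := Cc * Rpower x (-2 - eps)).
   assert (HE0 : 0 <= E) by (unfold E; pose proof (Rpower_pos x (-2 - eps)); nra).
   assert (Had : 0 < alpha - d) by lra.
   set (X := K * tau / ((alpha - d) * x)).
   assert (HX0 : 0 <= X) by (unfold X; apply Rmult_le_pos; [nra| apply Rlt_le, Rinv_0_lt_compat; nra]).
   assert (HTFx : 1/2 <= TF x) by (apply Rle_trans with (TF (INR n0)); [auto | apply TFmono; lra]).
   induction T as [|T IHT].
   { rewrite D0. rewrite Rmult_0_r. nra. }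
   assert (HDn : D p T n <= K).
   { pose proof (D_nonneg p T n Hb Hmo Hn1'). assert (K * TF x <= K) by (specialize (TFle1 x); nra). nra. }
   assert (HDk : forall k, (1 <= k <= n)%nat -> 0 <= D p T k <= K).
   { intros k Hk. pose proof (D_nonneg p T k Hb Hmo ltac:(lia)). split; auto.
     destruct (Nat.eq_dec k n). subst k; auto.
     specialize (IHk k T ltac:(lia)). specialize (TFle1 (Rmax (INR k) (INR n0))).
     assert (1 <= INR k) by (apply (le_INR 1); lia). nra. }
   assert (Hterm : forall k, (k < S n)%nat -> w p n k * D p T k <= w p n k * X + E * K).
   { intros k Hk. destruct k as [|k].
     { rewrite w0 by (auto; lia). nra. }
     pose proof (HDk (S k) ltac:(lia)) as [HD0 HDK].
     pose proof (w_nonneg p n (S k) Hb Hmo ltac:(lia)) as Hw0.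
     destruct (Rlt_dec (INR (S k)) ((alpha - d) * x)) as [Hlow|Hnlow].
     { assert (w p n (S k) <= E).
       { apply Rle_trans with (cdfY p n (S k)). apply w_le_cdf; auto; lia.
         apply Rle_trans with (devY p alpha (delta n) n). apply devlow; auto; lia.
         apply Hc'; lia. }
       assert (w p n (S k) * X >= 0) by nra. nra. }
     destruct (Rlt_dec (beta * x) (INR (S k))) as [Hhigh|Hnhigh].
     { assert (w p n (S k) <= E).
       { apply Rle_trans with (1 - cdfY p (S n) (S k)). apply w_le_tail; auto; lia.
         apply Rle_trans with (devY p alpha (delta (S n)) (S n)). apply devhigh; auto; try lia. fold d1. lra.
         apply Rle_trans with (Cc * Rpower (INR (S n)) (-2 - eps)). apply Hc'; lia.
         unfold E. apply Rmult_le_compat_l; auto. replace (-2 - eps) with (- (2 + eps)) by ring.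
         apply Rpower_anti. lra. rewrite S_INR; fold x; lra. lra. }
       assert (w p n (S k) * X >= 0) by nra. nra. }
     assert (Hk1 : INR n0 <= INR (S k)) by nra.
     assert (Hkn : (S k < n)%nat).
     { apply INR_lt. fold x. unfold beta in Hnhigh. nra. }
     specialize (IHk (S k) T ltac:(lia)).
     rewrite Rmax_left in IHk by lra.
     assert (TF (INR (S k)) <= tau) by (apply TFmono; lra).
     assert (INR (S k) * D p T (S k) <= K * tau) by nra.
     assert (D p T (S k) <= X).
     { unfold X. apply (Rmult_le_reg_r ((alpha - d) * x)). nra.
       unfold Rdiv. rewrite Rmult_assoc, Rinv_l by nra. nra. }
     assert (w p n (S k) * D p T (S k) <= w p n (S k) * X) by (apply Rmult_le_compat_l; auto).
     nra. }
   assert (Hsum : D p (S T) n <= X * (alpha + Cm * d) + INR (S n) * (E * K)).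
   { rewrite D_S by auto. rewrite G0_diff2 by lia. rewrite Rplus_0_l.
     apply Rle_trans with (sm (fun k => w p n k * X + E * K) (S n)). apply sm_le; auto.
     rewrite sm_plus, sm_const.
     rewrite (sm_ext _ (fun k => X * w p n k)) by (intros; ring). rewrite sm_scal.
     rewrite <- EY_diff by auto. specialize (Hm' n ltac:(lia)). fold d in Hm'.
     assert (X * (EY p (S n) - EY p n) <= X * (alpha + Cm * d)) by (apply Rmult_le_compat_l; auto).
     lra. }
   assert (Hfac : (alpha + Cm * d) / (alpha - d) <= 1 + c * d).
   { apply (Rmult_le_reg_r (alpha - d)). lra. unfold Rdiv. rewrite Rmult_assoc, Rinv_l by lra.
     unfold c. assert (2 * (Cm + 1) / alpha * alpha = 2 * (Cm + 1)) by (field; lra).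
     assert (2 * (Cm + 1) / alpha * d <= Cm + 1).
     { apply (Rmult_le_reg_r alpha). lra. assert (2 * (Cm + 1) / alpha * d * alpha = 2 * (Cm + 1) * d) by (field; lra). nra. }
     nra. }
   assert (HnX : x * X * (alpha + Cm * d) = K * (tau * ((alpha + Cm * d) / (alpha - d)))).
   { unfold X. field. split; lra. }
   assert (HnE : x * (INR (S n) * E) <= 2 * Cc * Rpower x (- eps)).
   { unfold E. rewrite Rpower_2eps by lra. rewrite S_INR. fold x.
     pose proof (Rpower_pos x (- eps)).
     replace (x * ((x + 1) * (Cc * (Rpower x (- eps) / (x * x))))) with
       (Cc * Rpower x (- eps) * ((x + 1) / x)) by (field; lra).
     assert ((x + 1) / x <= 2) by (apply (Rmult_le_reg_r x); [lra|]; unfold Rdiv; rewrite Rmult_assoc, Rinv_l by lra; lra).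
     assert (0 <= Cc * Rpower x (- eps)) by nra. nra. }
   assert (Hdd : d <= Cd * Rpower (ln x) (-1 - eps)) by (apply Hd'; lia).
   pose proof (Tf_gap K1 a eps beta x HK1 Ha He Hbeta ltac:(nra)) as Hgap. fold TF in Hgap. fold tau in Hgap.
   replace (- eps - 1) with (-1 - eps) in Hgap by ring.
   assert (HK1e : K1 * (eps * - ln beta) = c * Cd) by (unfold K1; fold L; field; split; lra).
   assert (Hae : a * (Rpower beta (- eps) - 1) = 2 * Cc) by (unfold a; field; lra).
   assert (Hfin : tau * ((alpha + Cm * d) / (alpha - d)) + 2 * Cc * Rpower x (- eps) <= TF x).
   { assert (tau * ((alpha + Cm * d) / (alpha - d)) <= tau * (1 + c * d)) by (apply Rmult_le_compat_l; lra).
     assert (c * d <= c * (Cd * Rpower (ln x) (-1 - eps))) by (apply Rmult_le_compat_l; auto).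
     assert (tau * (c * d) <= c * d) by (assert (0 <= c * d) by nra; nra).
     replace (K1 * (eps * - ln beta * Rpower (ln x) (-1 - eps))) with (c * Cd * Rpower (ln x) (-1 - eps)) in Hgap
       by (rewrite <- HK1e; ring).
     replace (a * (Rpower beta (- eps) - 1) * Rpower x (- eps)) with (2 * Cc * Rpower x (- eps)) in Hgap
       by (rewrite <- Hae; ring).
     lra. }
   assert (x * D p (S T) n <= x * (X * (alpha + Cm * d) + INR (S n) * (E * K))) by (apply Rmult_le_compat_l; lra).
   assert (x * (INR (S n) * (E * K)) <= 2 * Cc * Rpower x (- eps) * K).
   { replace (x * (INR (S n) * (E * K))) with (x * (INR (S n) * E) * K) by ring. apply Rmult_le_compat_r; auto. }
   assert (K * (tau * ((alpha + Cm * d) / (alpha - d)) + 2 * Cc * Rpower x (- eps)) <= K * TF x)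
     by (apply Rmult_le_compat_l; auto).
   nra.
Qed.

Definition len x y u v := Rmax 0 (Rmin y v - Rmax x u).

Ltac rmm := unfold len, Rmax, Rmin in *; repeat match goal with |- context [Rle_dec ?a ?b] => destruct (Rle_dec a b) | H : context [Rle_dec ?a ?b] |- _ => destruct (Rle_dec a b) end.

Lemma len_add x y u v z : x <= y -> u <= v -> v <= z -> len x y u v + len x y v z = len x y u z.
Proof. intros. rmm; lra. Qed.

Lemma len_sym x y u v : len x y u v = len u v x y.
Proof. rmm; lra. Qed.

Lemma len_nonneg x y u v : 0 <= len x y u v.
Proof. rmm; lra. Qed.

Lemma len_empty x y u : len x y u u = 0.
Proof. rmm; lra. Qed.

Lemma len_le x y u v : len x y u v <= Rmax 0 (y - u).
Proof. rmm; lra. Qed.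

Lemma len_full x y : 0 <= x -> x <= y -> y <= 1 -> len x y 0 1 = y - x.
Proof. intros. rmm; lra. Qed.

Lemma len_lip x y v v' : Rabs (len x y 0 v - len x y 0 v') <= Rabs (v - v').
Proof. unfold Rabs. destruct (Rcase_abs (v - v')); destruct (Rcase_abs (len x y 0 v - len x y 0 v')); rmm; lra. Qed.

Definition ind (b : bool) : R := if b then 1 else 0.

Definition cpl (a b : nat -> R) i j := len (sm a i) (sm a (S i)) (sm b j) (sm b (S j)).

Lemma sm_mono_step (b : nat -> R) : (forall k, 0 <= b k) -> forall j, sm b j <= sm b (S j).
Proof. intros. simpl. specialize (H j). lra. Qed.

Lemma sum_len b x y J : (forall k, 0 <= b k) ->
  sm (fun j => len x y (sm b j) (sm b (S j))) J = len x y 0 (sm b J).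
Proof. intros Hb. induction J.
 - simpl. rmm; lra.
 - rewrite sm_S, IHJ. destruct (Rle_dec x y).
   + apply len_add; auto. apply sm_nonneg; auto. apply sm_mono_step; auto.
   + rmm; lra. Qed.

Lemma headsum f t M : (t < M)%nat -> sm (fun i => ind (i <=? t)%nat * f i) M = sm f (S t).
Proof. intros H. induction H.
 - rewrite !sm_S. replace (sm (fun i => ind (i <=? t)%nat * f i) t) with (sm f t).
   unfold ind. rewrite Nat.leb_refl. ring.
   apply sm_ext. intros. unfold ind. destruct (Nat.leb_spec k t). ring. lia.
 - rewrite sm_S, IHle. unfold ind. destruct (Nat.leb_spec m t). lia. ring. Qed.

Lemma tailsum b x y t N : (forall k, 0 <= b k) -> (t <= N)%nat -> x <= y ->
  sm (fun j => ind (t <? j)%nat * len x y (sm b j) (sm b (S j))) (S N) = len x y (sm b (S t)) (sm b (S N)).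
Proof. intros Hb H Hxy. induction H.
 - rewrite len_empty.
   replace 0 with (sm (fun _ => 0) (S t)) by (rewrite sm_const; ring). apply sm_ext. intros.
   unfold ind. destruct (Nat.ltb_spec t k). lia. ring.
 - rewrite sm_S, IHle. unfold ind. destruct (Nat.ltb_spec t (S m)); [|lia]. rewrite Rmult_1_l.
   apply len_add; auto.
   + apply (sm_mono_n b (S t) (S m)); auto; lia.
   + apply sm_mono_step; auto. Qed.

Lemma cpl_sym a b i j : cpl a b i j = cpl b a j i.
Proof. unfold cpl. apply len_sym. Qed.

Lemma S1bound a b t N : (forall k, 0 <= a k) -> (forall k, 0 <= b k) -> (t < N)%nat ->
  sm (fun i => sm (fun j => cpl a b i j * (ind (i <=? t)%nat * ind (t <? j)%nat)) (S N)) (S N)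
  <= Rmax 0 (sm a (S t) - sm b (S t)).
Proof. intros Ha Hb Ht.
 rewrite (sm_ext _ (fun i => ind (i <=? t)%nat * len (sm a i) (sm a (S i)) (sm b (S t)) (sm b (S N)))).
 2:{ intros i Hi. rewrite <- (tailsum b (sm a i) (sm a (S i)) t N Hb ltac:(lia) (sm_mono_step a Ha i)).
     rewrite <- sm_scal. apply sm_ext. intros. unfold cpl. ring. }
 rewrite headsum by lia.
 rewrite (sm_ext _ (fun i => len (sm b (S t)) (sm b (S N)) (sm a i) (sm a (S i)))) by (intros; apply len_sym).
 rewrite sum_len by auto. rewrite len_sym. apply len_le. Qed.

Lemma count_ind i j N : sm (fun t => ind (i <=? t)%nat * ind (t <? j)%nat) N = INR (Nat.min j N - i).
Proof. induction N.
 - simpl. rewrite Nat.min_0_r. reflexivity.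
 - rewrite sm_S, IHN. unfold ind. destruct (Nat.leb_spec i N); destruct (Nat.ltb_spec N j).
   + replace (Nat.min j (S N) - i)%nat with (S (Nat.min j N - i)) by lia. rewrite S_INR. ring.
   + replace (Nat.min j (S N) - i)%nat with (Nat.min j N - i)%nat by lia. ring.
   + replace (Nat.min j (S N) - i)%nat with (Nat.min j N - i)%nat by lia. ring.
   + replace (Nat.min j (S N) - i)%nat with (Nat.min j N - i)%nat by lia. ring. Qed.

Lemma absdiff i j N : (i <= N)%nat -> (j <= N)%nat ->
  Rabs (INR i - INR j) = sm (fun t => ind (i <=? t)%nat * ind (t <? j)%nat + ind (j <=? t)%nat * ind (t <? i)%nat) N.
Proof. intros Hi Hj. rewrite sm_plus, !count_ind.
 rewrite (Nat.min_l j N Hj), (Nat.min_l i N Hi).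
 destruct (le_lt_dec i j).
 - replace (i - j)%nat with 0%nat by lia. rewrite minus_INR by auto. simpl.
   rewrite Rabs_left1. ring. assert (INR i <= INR j) by (apply le_INR; auto). lra.
 - replace (j - i)%nat with 0%nat by lia. rewrite minus_INR by lia. simpl.
   rewrite Rabs_right. ring. assert (INR j < INR i) by (apply lt_INR; auto). lra. Qed.

Lemma cost_bound a b N : (forall k, 0 <= a k) -> (forall k, 0 <= b k) ->
  sm (fun i => sm (fun j => cpl a b i j * Rabs (INR i - INR j)) (S N)) (S N)
  <= sm (fun t => Rabs (sm a (S t) - sm b (S t))) N.
Proof. intros Ha Hb.
 set (g := fun i j t => ind (i <=? t)%nat * ind (t <? j)%nat + ind (j <=? t)%nat * ind (t <? i)%nat).
 rewrite (sm_ext _ (fun i => sm (fun t => sm (fun j => cpl a b i j * g i j t) (S N)) N)).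
 2:{ intros i Hi. rewrite sm_exch. apply sm_ext. intros j Hj. rewrite (absdiff i j N) by lia.
     rewrite <- sm_scal. reflexivity. }
 rewrite sm_exch. apply sm_le. intros t Ht.
 unfold g. rewrite (sm_ext _ (fun i => sm (fun j => cpl a b i j * (ind (i <=? t)%nat * ind (t <? j)%nat)) (S N)
    + sm (fun j => cpl a b i j * (ind (j <=? t)%nat * ind (t <? i)%nat)) (S N))).
 2:{ intros. rewrite <- sm_plus. apply sm_ext. intros. ring. }
 rewrite sm_plus. pose proof (S1bound a b t N Ha Hb Ht).
 rewrite (sm_exch (fun i j => cpl a b i j * (ind (j <=? t)%nat * ind (t <? i)%nat)) (S N) (S N)).
 rewrite (sm_ext (fun j => sm (fun i => cpl a b i j * (ind (j <=? t)%nat * ind (t <? i)%nat)) (S N))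
   (fun j => sm (fun i => cpl b a j i * (ind (j <=? t)%nat * ind (t <? i)%nat)) (S N))).
 2:{ intros. apply sm_ext. intros. rewrite cpl_sym. reflexivity. }
 pose proof (S1bound b a t N Hb Ha Ht).
 assert (Rmax 0 (sm a (S t) - sm b (S t)) + Rmax 0 (sm b (S t) - sm a (S t)) = Rabs (sm a (S t) - sm b (S t))).
 { unfold Rabs, Rmax. destruct (Rcase_abs (sm a (S t) - sm b (S t))); destruct (Rle_dec 0 (sm a (S t) - sm b (S t)));
   destruct (Rle_dec 0 (sm b (S t) - sm a (S t))); lra. }
 lra. Qed.

Lemma is_Un_cv s l : infinite_sum s l -> Un_cv (sum_f_R0 s) l.
Proof. auto. Qed.

Lemma sm_le1 a : (forall k, 0 <= a k) -> infinite_sum a 1 -> forall n, sm a n <= 1.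
Proof. intros Ha H n. destruct n. simpl; lra. rewrite <- sum_sm.
 apply (growing_ineq (sum_f_R0 a)); auto. intro m. simpl. specialize (Ha (S m)). lra. Qed.

Lemma marg a b i : (forall k, 0 <= a k) -> (forall k, 0 <= b k) -> infinite_sum a 1 -> infinite_sum b 1 ->
  infinite_sum (fun j => cpl a b i j) (a i).
Proof. intros Ha Hb Ia Ib. intros eps He. destruct (Ib eps He) as [N HN]. exists N. intros J HJ.
 specialize (HN J HJ). unfold R_dist in *. rewrite sum_sm. unfold cpl. rewrite sum_len by auto.
 rewrite <- (sum_sm b J).
 assert (a i = len (sm a i) (sm a (S i)) 0 1).
 { rewrite len_full. simpl; ring. apply sm_nonneg; auto. apply sm_mono_step; auto. apply sm_le1; auto. }
 rewrite H. eapply Rle_lt_trans. apply len_lip. auto. Qed.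

Lemma pmf_nonneg p n t : basic p -> (1 <= n)%nat -> 0 <= pmfX p n t.
Proof. intros Hb Hn. destruct t; simpl.
 - destruct (Nat.eqb n 1); lra.
 - pose proof (G_dec p t n Hb Hn). unfold G in H. simpl in H. lra. Qed.

Lemma Mdiff p N n m : basic p -> monoH p -> (1 <= n <= m)%nat ->
  sm (fun t => Rabs (G p t m - G p t n)) N = M p N m - M p N n.
Proof. intros Hb Hm Hnm. unfold M. rewrite <- sm_minus. apply sm_ext. intros.
 pose proof (G_mono_le p k n m Hb Hm Hnm). rewrite Rabs_right; lra. Qed.

Lemma Mgrowth p K N n m : basic p -> monoH p -> (1 <= n <= m)%nat -> 0 <= K ->
  (forall k T, (1 <= k)%nat -> INR k * D p T k <= K) ->
  M p N m - M p N n <= INR (m - n) * (K / INR n).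
Proof. intros Hb Hmo [Hn Hnm] HK HD. induction Hnm.
 - rewrite Nat.sub_diag. simpl. lra.
 - replace (S m - n)%nat with (S (m - n)) by lia. rewrite S_INR.
   assert (M p N (S m) - M p N m <= K / INR n).
   { fold (D p N m). specialize (HD m N ltac:(lia)).
     assert (1 <= INR n) by (apply (le_INR 1); auto). assert (INR n <= INR m) by (apply le_INR; auto).
     pose proof (D_nonneg p N m Hb Hmo ltac:(lia)).
     apply (Rmult_le_reg_l (INR n)). lra. unfold Rdiv.
     rewrite <- Rmult_assoc, (Rmult_comm (INR n) K), Rmult_assoc, Rinv_r by lra.
     rewrite Rmult_1_r. nra. }
   lra. Qed.

Lemma cv_const c : Un_cv (fun _ => c) c.
Proof. intros eps He. exists 0%nat. intros. unfold R_dist. rewrite Rminus_diag_eq, Rabs_R0; auto. Qed.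

Theorem mainTheorem2
  (p : nat -> nat -> R) (alpha eps : R) (delta : nat -> R)
  (Hnonneg : forall n k, (1 <= n)%nat -> 0 <= p n k)
  (Hsupp : forall n k, (1 <= n)%nat -> (k = 0%nat \/ (n < k)%nat) -> p n k = 0)
  (Hmass : forall n, (1 <= n)%nat -> sum_f_R0 (p n) n = 1)
  (Hnotn : forall n, (2 <= n)%nat -> p n n < 1)
  (Hmono : forall n k, (1 <= n)%nat -> (1 <= k)%nat -> cdfY p (S n) k <= cdfY p n k)
  (Halpha : 0 < alpha < 1) (Heps : 0 < eps)
  (Hdelta : exists C N, forall n, (N <= n)%nat ->
              Rabs (delta n) <= C * Rpower (ln (INR n)) (-1 - eps))
  (Hmean : exists C N, forall n, (N <= n)%nat ->
              Rabs (EY p (S n) - EY p n - alpha) <= C * Rabs (delta n))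
  (Hconc : exists C N, forall n, (N <= n)%nat ->
              devY p alpha (delta n) n <= C * Rpower (INR n) (-2 - eps)) :
  (forall n, (1 <= n)%nat ->
     infinite_sum (pmfX p n) 1 /\
     exists e, infinite_sum (fun t => INR t * pmfX p n t) e) /\
  (exists EX : nat -> R,
     (forall n, (1 <= n)%nat -> infinite_sum (fun t => INR t * pmfX p n t) (EX n)) /\
     exists C N, forall n, (1 <= n)%nat -> (N <= n)%nat ->
       Rabs (EX (S n) - EX n) <= C / INR n) /\
  (exists C, forall n m, (1 <= n)%nat -> (1 <= m)%nat ->
     wass_le (pmfX p n) (pmfX p m)
             (C * Rabs (INR n - INR m) / INR (Nat.min n m))).
Proof.
 assert (Hb : basic p) by (split; [|split]; auto).
 assert (Hmo : monoH p) by exact Hmono.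
 destruct (D_bound p alpha eps delta Hb Hnotn Hmo Halpha Heps Hdelta Hmean Hconc) as [K [HK HD]].
 assert (Hex : forall n, exists l, (1 <= n)%nat -> Un_cv (fun T => M p T n) l).
 { intros n. destruct (le_lt_dec 1 n).
   - destruct (M_cv p n Hb Hnotn l) as [x Hx]. exists x; auto.
   - exists 0. intros; lia. }
 set (EX := fun n => proj1_sig (constructive_indefinite_description _ (Hex n))).
 assert (HEX : forall n, (1 <= n)%nat -> Un_cv (fun T => M p T n) (EX n)).
 { intros n Hn. unfold EX. destruct (constructive_indefinite_description _ (Hex n)) as [x Hx]. simpl. auto. }
 assert (P1 : forall n, (1 <= n)%nat -> infinite_sum (pmfX p n) 1 /\ infinite_sum (fun t => INR t * pmfX p n t) (EX n)).
 { intros n Hn. apply part1; auto. }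
 split; [|split].
 - intros n Hn. destruct (P1 n Hn). split; auto. exists (EX n); auto.
 - exists EX. split. intros n Hn; apply P1; auto.
   exists K, 0%nat. intros n Hn _.
   pose proof (CV_minus _ _ _ _ (HEX (S n) ltac:(lia)) (HEX n Hn)) as Hc.
   assert (Hl : EX (S n) - EX n <= K / INR n).
   {
     eapply Rle_cv_lim; [ | exact Hc | apply (cv_const (K / INR n))]. simpl.
     intros T. fold (D p T n). specialize (HD n T Hn).
     assert (1 <= INR n) by (apply (le_INR 1); auto).
     apply (Rmult_le_reg_l (INR n)). lra. unfold Rdiv.
     rewrite <- Rmult_assoc, (Rmult_comm (INR n) K), Rmult_assoc, Rinv_r by lra. lra. }
   assert (Hg : 0 <= EX (S n) - EX n).
   { eapply Rle_cv_lim; [ | apply (cv_const 0) | exact Hc]. simpl.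
     intros T. fold (D p T n). apply D_nonneg; auto. }
   rewrite Rabs_right; lra.
 - exists K. intros n m Hn Hm eta Heta.
   exists (cpl (pmfX p n) (pmfX p m)).
   pose proof (pmf_nonneg p n) as Pn. pose proof (pmf_nonneg p m) as Pm.
   assert (An : forall k, 0 <= pmfX p n k) by (intros; apply Pn; auto).
   assert (Am : forall k, 0 <= pmfX p m k) by (intros; apply Pm; auto).
   destruct (P1 n Hn) as [In _]. destruct (P1 m Hm) as [Im _].
   split.
   + split; [|split].
     * intros; apply len_nonneg.
     * intros i. apply marg; auto.
     * intros j. intros e He. destruct (marg (pmfX p m) (pmfX p n) j Am An Im In e He) as [N0 HN0].
       exists N0. intros J HJ. specialize (HN0 J HJ).
       rewrite (sum_eq (fun i => cpl (pmfX p n) (pmfX p m) i j) (fun i => cpl (pmfX p m) (pmfX p n) j i)); auto.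
       intros; apply cpl_sym.
   + intro N. rewrite sum_sm.
     rewrite (sm_ext _ (fun i => sm (fun j => cpl (pmfX p n) (pmfX p m) i j * Rabs (INR i - INR j)) (S N)))
       by (intros; apply sum_sm).
     eapply Rle_trans. apply cost_bound; auto.
     rewrite (sm_ext _ (fun t => Rabs (G p t m - G p t n))).
     2:{ intros t _. rewrite <- !sum_sm, !pmf_sum. f_equal. ring. }
     destruct (le_lt_dec n m) as [Hnm|Hnm].
     * rewrite Mdiff by auto. rewrite Nat.min_l by auto.
       eapply Rle_trans. apply (Mgrowth p K N n m); auto.
       rewrite Rabs_left1 by (assert (INR n <= INR m) by (apply le_INR; auto); lra).
       rewrite minus_INR by auto. assert (0 < INR n) by (apply lt_0_INR; lia).
       unfold Rdiv. replace (K * - (INR n - INR m) * / INR n) with ((INR m - INR n) * (K * / INR n)) by ring. lra.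
     * rewrite (sm_ext _ (fun t => Rabs (G p t n - G p t m))) by (intros; apply Rabs_minus_sym).
       rewrite Mdiff by (auto; lia). rewrite Nat.min_r by lia.
       eapply Rle_trans. apply (Mgrowth p K N m n); auto; lia.
       rewrite Rabs_right by (assert (INR m < INR n) by (apply lt_INR; auto); lra).
       rewrite minus_INR by lia. assert (0 < INR m) by (apply lt_0_INR; lia).
       unfold Rdiv. replace (K * (INR n - INR m) * / INR m) with ((INR n - INR m) * (K * / INR m)) by ring. lra.
Qed.
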